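(* Let $\mathcal X,\mathcal Y$ be Hilbert spaces and $\mathbf A\colon\mathcal X\to\mathcal Y$ a bounded linear operator with singular value decomposition $\mathbf Ax=\sum_{n\in\mathbb N}\sigma_n\langle u_n,x\rangle v_n$, where $(u_n)$, $(v_n)$ are orthonormal systems in $\mathcal X$, $\mathcal Y$ and $\sigma_n>0$. Let $\mathbf B_\alpha(y)=\sum_{\sigma_n^2\ge\alpha}\sigma_n^{-1}\langle y,v_n\rangle u_n$ be truncated SVD, let $(\mathbf U_{\theta(\alpha)})_{\alpha>0}$ be maps $\mathcal X\to\mathcal X$, and define $$\nu_{\theta(\alpha)}(z)\coloneqq(\mathrm{Id}_{\mathcal X}-\mathbf B_\alpha\mathbf A)\mathbf U_{\theta(\alpha)}(z)=\sum_{\sigma_n^2<\alpha}\langle\mathbf U_{\theta(\alpha)}z,u_n\rangle u_n,\qquad \mathbf R_\alpha(y_\delta)\coloneqq(\mathrm{Id}_{\mathcal X}+\nu_{\theta(\alpha)})\mathbf B_\alpha(y_\delta).$$ Let $\mathrm{Id}_{\mathcal X}+\mathbf N$ be a null space network, $\mathcal M\coloneqq(\mathrm{Id}_{\mathcal X}+\mathbf N)(\operatorname{ran}(\mathbf A^{+}))$, and assume $(\nu_{\theta(\alpha)})_{\alpha>0}$ is $((\mathbf B_\alpha)_{\alpha>0},\mathbf N)$-adapted. Let $\rho,\mu>0$ and assume $d_\alpha(x;\rho,\mu)=\mathcal O(\alpha^\mu)$ for all $x$ in some set $\mathcal M_{\rho,\mu}\subseteq\mathcal M$. Then, provided $\alpha\asymp\delta^{2/(2\mu+1)}$,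 for all $x\in\mathcal M_{\rho,\mu}$ and $y_\delta\in\mathcal Y$ with $\|\mathbf Ax-y_\delta\|\le\delta$ we have $\|\mathbf R_\alpha(y_\delta)-x\|=\mathcal O(\delta^{2\mu/(2\mu+1)})$ as $\alpha\to0$.
   Context: $\mathbf A^{+}$ is the Moore–Penrose inverse, $\operatorname{ran}(\mathbf A^{+})=\ker(\mathbf A)^\perp$. A null space network is $\mathrm{Id}_{\mathcal X}+\mathbf N$ with $\mathbf N=\mathbf P_{\ker(\mathbf A)}\mathbf U$, $\mathbf P_{\ker(\mathbf A)}$ the orthogonal projection onto $\ker(\mathbf A)$ and $\mathbf U\colon\mathcal X\to\mathcal X$ Lipschitz. A family of Lipschitz maps $\nu_{\theta(\alpha)}\colon\mathcal X\to\mathcal X$ is $((\mathbf B_\alpha),\mathbf N)$-adapted if $\nu_{\theta(\alpha)}(\mathbf B_\alpha\mathbf Az)\to\mathbf N(z)$ as $\alpha\to0$ for all $z\in\operatorname{ran}(\mathbf A^{+})$ and all Lipschitz constants are bounded by some $L>0$. Distance function: $d_\alpha(x;\rho,\mu)\coloneqq\inf\{\|x-\nu_{\theta(\alpha)}\mathbf B_\alpha\mathbf Ax-(\mathbf A^*\mathbf A)^\mu\omega\|:\omega\in\mathcal X,\ \|\omega\|\le\rho\}$. *)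

(* Defs.v *)
(* Real Hilbert spaces are modelled as
   complete normed modules over R : realType equipped with an inner product
   inducing the norm. *)
From HB Require Import structures.
From mathcomp Require Import all_boot all_order all_algebra.
From mathcomp Require Import all_classical all_reals all_analysis.
Set Implicit Arguments. Unset Strict Implicit. Unset Printing Implicit Defensive.
Import Order.TTheory GRing.Theory Num.Theory.
Import numFieldNormedType.Exports.
Local Open Scope classical_set_scope.
Local Open Scope ring_scope.

Section Defs.
Variable R : realType.

Record inner_product (X : normedModType R) (ip : X -> X -> R) : Prop := {
  ip_sym : forall x y, ip x y = ip y x;
  ip_linl : forall (a : R) x y z, ip (a *: x + y) z = a * ip x z + ip y z;
  ip_norm : forall x, `|x| ^+ 2 = ip x x }.

Definition orthonormal (X : normedModType R) (ip : X -> X -> R)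
  (e : nat -> X) : Prop :=
  forall i j, ip (e i) (e j) = (i == j)%:R.

Definition hsum (X : normedModType R) (f : nat -> X) : X := limn (series f).

Definition bounded_linear (X Y : normedModType R) (A : X -> Y) : Prop :=
  linear A /\ exists C : R, forall x, `|A x| <= C * `|x|.

Definition is_svd (X Y : normedModType R) (ipX : X -> X -> R) (ipY : Y -> Y -> R)
  (A : X -> Y) (sigma : nat -> R) (u : nat -> X) (v : nat -> Y) : Prop :=
  orthonormal ipX u /\ orthonormal ipY v /\ (forall n, 0 < sigma n) /\
  forall x, series (fun n => (sigma n * ipX (u n) x) *: v n) @ \oo --> A x.

Definition tsvd (X Y : normedModType R) (ipY : Y -> Y -> R)
  (sigma : nat -> R) (u : nat -> X) (v : nat -> Y) (alpha : R) (y : Y) : X :=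
  hsum (fun n => if alpha <= sigma n ^+ 2
                 then ((sigma n)^-1 * ipY y (v n)) *: u n else 0).

(* (A^* A)^mu w = sum_n sigma_n^(2 mu) <u_n, w> u_n  (functional calculus via SVD) *)
Definition AApow (X : normedModType R) (ipX : X -> X -> R)
  (sigma : nat -> R) (u : nat -> X) (mu : R) (w : X) : X :=
  hsum (fun n => (sigma n `^ (2 * mu) * ipX (u n) w) *: u n).

Definition kernel (X Y : normedModType R) (A : X -> Y) : set X := [set x | A x = 0].

(* ran(A^+) = ker(A)^perp *)
Definition ran_pinv (X Y : normedModType R) (ipX : X -> X -> R) (A : X -> Y) : set X :=
  [set z | forall k, kernel A k -> ipX z k = 0].

Definition lipschitz_with (X : normedModType R) (L : R) (f : X -> X) : Prop :=
  forall x y, `|f x - f y| <= L * `|x - y|.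

Definition lipschitz (X : normedModType R) (f : X -> X) : Prop :=
  exists L : R, lipschitz_with L f.

Definition is_orth_proj (X : normedModType R) (ipX : X -> X -> R)
  (K : set X) (P : X -> X) : Prop :=
  forall x, K (P x) /\ forall k, K k -> ipX (x - P x) k = 0.

Definition null_space_network (X Y : normedModType R) (ipX : X -> X -> R)
  (A : X -> Y) (N : X -> X) : Prop :=
  exists (U : X -> X) (P : X -> X),
    lipschitz U /\ is_orth_proj ipX (kernel A) P /\ forall z, N z = P (U z).

Definition nu_map (X Y : normedModType R) (A : X -> Y) (B : R -> Y -> X)
  (U : R -> X -> X) (alpha : R) (z : X) : X :=
  U alpha z - B alpha (A (U alpha z)).

Definition recon (X Y : normedModType R) (A : X -> Y) (B : R -> Y -> X)
  (U : R -> X -> X) (alpha : R) (y : Y) : X :=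
  B alpha y + nu_map A B U alpha (B alpha y).

Definition adapted (X Y : normedModType R) (ipX : X -> X -> R) (A : X -> Y)
  (B : R -> Y -> X) (nu : R -> X -> X) (N : X -> X) : Prop :=
  (exists L : R, 0 < L /\ forall alpha, 0 < alpha -> lipschitz_with L (nu alpha)) /\
  forall z, ran_pinv ipX A z ->
    (fun alpha => nu alpha (B alpha (A z))) @ 0^'+ --> N z.

Definition dist_alpha (X Y : normedModType R) (A : X -> Y) (B : R -> Y -> X)
  (nu : R -> X -> X) (AAmu : X -> X) (rho : R) (alpha : R) (x : X) : R :=
  inf [set `|x - nu alpha (B alpha (A x)) - AAmu w| | w in [set w : X | `|w| <= rho]].

End Defs.

(* Main.v *)
Require Import Defs.
From HB Require Import structures.
From mathcomp Require Import all_boot all_order all_algebra.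
From mathcomp Require Import all_classical all_reals all_analysis.
From mathcomp Require Import ring lra.
Import Order.TTheory GRing.Theory Num.Theory.
Import numFieldNormedType.Exports.
Local Open Scope classical_set_scope.
Local Open Scope ring_scope.



Lemma ip0l {R : realType} {X : normedModType R} {ip : X -> X -> R}
  (Hip : inner_product ip) z : ip 0 z = 0.
Proof.
have := ip_linl Hip 1 0 0 z; rewrite scale1r addr0 mul1r => /eqP.
by rewrite -subr_eq subrr eq_sym => /eqP.
Qed.

Lemma ipDl {R : realType} {X : normedModType R} {ip : X -> X -> R}
  (Hip : inner_product ip) x y z : ip (x + y) z = ip x z + ip y z.
Proof. by have := ip_linl Hip 1 x y z; rewrite scale1r mul1r. Qed.

Lemma ipZl {R : realType} {X : normedModType R} {ip : X -> X -> R}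
  (Hip : inner_product ip) a x z : ip (a *: x) z = a * ip x z.
Proof. by have := ip_linl Hip a x 0 z; rewrite addr0 (ip0l Hip) addr0. Qed.

Lemma ipNl {R : realType} {X : normedModType R} {ip : X -> X -> R}
  (Hip : inner_product ip) x z : ip (- x) z = - ip x z.
Proof. by rewrite -scaleN1r (ipZl Hip) mulN1r. Qed.

Lemma ipBl {R : realType} {X : normedModType R} {ip : X -> X -> R}
  (Hip : inner_product ip) x y z : ip (x - y) z = ip x z - ip y z.
Proof. by rewrite (ipDl Hip) (ipNl Hip). Qed.

Lemma ipDr {R : realType} {X : normedModType R} {ip : X -> X -> R}
  (Hip : inner_product ip) x y z : ip z (x + y) = ip z x + ip z y.
Proof. by rewrite !(ip_sym Hip z) (ipDl Hip). Qed.

Lemma ipZr {R : realType} {X : normedModType R} {ip : X -> X -> R}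
  (Hip : inner_product ip) a x z : ip z (a *: x) = a * ip z x.
Proof. by rewrite !(ip_sym Hip z) (ipZl Hip). Qed.

Lemma ipBr {R : realType} {X : normedModType R} {ip : X -> X -> R}
  (Hip : inner_product ip) x y z : ip z (x - y) = ip z x - ip z y.
Proof. by rewrite !(ip_sym Hip z) (ipBl Hip). Qed.

Lemma ipNr {R : realType} {X : normedModType R} {ip : X -> X -> R}
  (Hip : inner_product ip) x z : ip z (- x) = - ip z x.
Proof. by rewrite !(ip_sym Hip z) (ipNl Hip). Qed.

Lemma ip_suml {R : realType} {X : normedModType R} {ip : X -> X -> R}
  (Hip : inner_product ip) (I : Type) (r : seq I) (P : pred I) (F : I -> X) z :
  ip (\sum_(i <- r | P i) F i) z = \sum_(i <- r | P i) ip (F i) z.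
Proof.
apply: (big_morph (fun x => ip x z)); first by move=> x y; exact: ipDl.
exact: ip0l.
Qed.

Lemma normsq_ip {R : realType} {X : normedModType R} {ip : X -> X -> R}
  (Hip : inner_product ip) x : `|x| ^+ 2 = ip x x.
Proof. exact: ip_norm. Qed.

Lemma normsqD {R : realType} {X : normedModType R} {ip : X -> X -> R}
  (Hip : inner_product ip) x y : `|x + y| ^+ 2 = `|x| ^+ 2 + 2 * ip x y + `|y| ^+ 2.
Proof.
rewrite !(normsq_ip Hip) (ipDl Hip) !(ipDr Hip) (ip_sym Hip y x); ring.
Qed.

Lemma normsqB {R : realType} {X : normedModType R} {ip : X -> X -> R}
  (Hip : inner_product ip) x y : `|x - y| ^+ 2 = `|x| ^+ 2 - 2 * ip x y + `|y| ^+ 2.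
Proof.
rewrite !(normsq_ip Hip) (ipBl Hip) !(ipBr Hip) (ip_sym Hip y x); ring.
Qed.

Lemma polar {R : realType} {X : normedModType R} {ip : X -> X -> R}
  (Hip : inner_product ip) a b : ip a b = (`|a + b| ^+ 2 - `|a - b| ^+ 2) / 4.
Proof.
rewrite !(normsq_ip Hip) !(ipDl Hip) !(ipDr Hip) ?(ipNl Hip) ?(ipNr Hip) ?(ipNl Hip).
rewrite (ip_sym Hip b a); by field.
Qed.

Lemma ip_cvgl {R : realType} {X : normedModType R} {ip : X -> X -> R}
  (Hip : inner_product ip) {T : Type} {F : set_system T} (FF : Filter F)
  {f : T -> X} {a} b : f t @[t --> F] --> a -> ip (f t) b @[t --> F] --> ip a b.
Proof.
move=> fa.
have -> : (fun t => ip (f t) b) = (fun t => (`|f t + b| ^+ 2 - `|f t - b| ^+ 2) / 4).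
  by apply: funext => t; rewrite (polar Hip).
rewrite (polar Hip).
apply: cvgM; last exact: cvg_cst.
have hD : (fun t => f t + b) @ F --> a + b by apply: cvgD => //; exact: cvg_cst.
have hB : (fun t => f t - b) @ F --> a - b by apply: cvgB => //; exact: cvg_cst.
apply: cvgB; rewrite /GRing.exp /=; apply: cvgM; exact: cvg_norm.
Qed.

Lemma sq_le {R : realType} (a b : R) : 0 <= a -> 0 <= b -> a ^+ 2 <= b ^+ 2 -> a <= b.
Proof. move=> ha hb h; nra. Qed.



Lemma sum_dirac {V : zmodType} (f : nat -> V) (m N : nat) :
  \sum_(0 <= k < N) (if k == m then f k else 0) = if (m < N)%N then f m else 0.
Proof.
elim: N => [|N IH]; first by rewrite big_geq.
rewrite big_nat_recr //= IH.
case: (ltngtP m N) => [lt|gt|->].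
- by rewrite ?(gtn_eqF lt) addr0 ltnS ltnW.
- by rewrite ?(ltn_eqF gt) addr0 ltnS leqNgt gt.
- by rewrite ?ltnn ?eqxx add0r ltnSn.
Qed.

Lemma coef_partial {R : realType} {X : normedModType R} {ip : X -> X -> R}
  (Hip : inner_product ip) {e : nat -> X} (He : Defs.orthonormal ip e) (c : nat -> R) N m :
  ip (\sum_(0 <= k < N) c k *: e k) (e m) = if (m < N)%N then c m else 0.
Proof.
rewrite (ip_suml Hip) -sum_dirac; apply: eq_bigr => k _.
rewrite (ipZl Hip) He; case: eqP => _; [exact: mulr1 | exact: mulr0].
Qed.

Lemma pyth {R : realType} {X : normedModType R} {ip : X -> X -> R}
  (Hip : inner_product ip) {e : nat -> X} (He : Defs.orthonormal ip e) (c : nat -> R) a b :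
  `|\sum_(a <= k < b) c k *: e k| ^+ 2 = \sum_(a <= k < b) c k ^+ 2.
Proof.
elim: b => [|b IH]; first by rewrite !big_geq // normr0 expr0n.
case: (leqP a b) => ab; last by rewrite !big_geq // normr0 expr0n.
rewrite !big_nat_recr //= (normsqD Hip) IH.
have -> : ip (\sum_(a <= k < b) c k *: e k) (c b *: e b) = 0.
  rewrite (ipZr Hip) (ip_suml Hip) big_nat_cond big1 ?mulr0 // => k /andP[/andP[_ kb] _].
  by rewrite (ipZl Hip) He (ltn_eqF kb) mulr0.
rewrite normrZ exprMn (normsq_ip Hip) He eqxx real_normK ?num_real // /= mulr0 addr0 mulr1n mulr1. done.
Qed.

Lemma bessel {R : realType} {X : normedModType R} {ip : X -> X -> R}
  (Hip : inner_product ip) {e : nat -> X} (He : Defs.orthonormal ip e) z N :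
  \sum_(0 <= k < N) ip (e k) z ^+ 2 <= `|z| ^+ 2.
Proof.
set S := \sum_(0 <= k < N) ip (e k) z *: e k.
have h1 : ip z S = \sum_(0 <= k < N) ip (e k) z ^+ 2.
  rewrite (ip_sym Hip) (ip_suml Hip); apply: eq_bigr => k _.
  by rewrite (ipZl Hip) expr2.
have h2 := pyth Hip He (fun k => ip (e k) z) 0 N.
have := sqr_ge0 `|z - S|; rewrite -[_ ^+ 2]/(`|z - S| ^+ 2) (normsqB Hip) h1 h2.
lra.
Qed.



Lemma onb_ip_lim {R : realType} {X : normedModType R} {ip : X -> X -> R}
  (Hip : inner_product ip) {e : nat -> X} (c : nat -> R) (S : X) z :
  series (fun k => c k *: e k) @ \oo --> S ->
  (fun N => \sum_(0 <= k < N) c k * ip (e k) z) @ \oo --> ip S z.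
Proof.
move=> hS; have := ip_cvgl Hip eventually_filter z hS.
have -> : (fun N => ip (series (fun k => c k *: e k) N) z) =
          (fun N => \sum_(0 <= k < N) c k * ip (e k) z) => //.
apply: funext => N; rewrite /series /= (ip_suml Hip); apply: eq_bigr => k _.
exact: ipZl.
Qed.

Lemma onb_coef {R : realType} {X : normedModType R} {ip : X -> X -> R}
  (Hip : inner_product ip) {e : nat -> X} (He : Defs.orthonormal ip e)
  (c : nat -> R) (S : X) m :
  series (fun k => c k *: e k) @ \oo --> S -> ip S (e m) = c m.
Proof.
move=> hS; have h1 := ip_cvgl Hip eventually_filter (e m) hS.
have h2 : (fun N => ip (series (fun k => c k *: e k) N) (e m)) @ \oo --> c m.
  have E : {near \oo, (fun=> c m) =1 (fun N => ip (series (fun k => c k *: e k) N) (e m))}.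
    near=> N; rewrite /series /= (coef_partial Hip He) ifT //.
    near: N; exact: nbhs_infty_gt.
  exact: (cvg_trans (near_eq_cvg E) (cvg_cst _)).
exact: (cvg_unique _ h1 h2).
Unshelve. all: by end_near.
Qed.

Lemma onb_normsq_lim {R : realType} {X : normedModType R} {ip : X -> X -> R}
  (Hip : inner_product ip) {e : nat -> X} (He : Defs.orthonormal ip e)
  (c : nat -> R) (S : X) :
  series (fun k => c k *: e k) @ \oo --> S ->
  (fun N => \sum_(0 <= k < N) c k ^+ 2) @ \oo --> `|S| ^+ 2.
Proof.
move=> hS.
have h : (fun N => `|series (fun k => c k *: e k) N| ^+ 2) @ \oo --> `|S| ^+ 2.
  rewrite /GRing.exp /=; apply: cvgM; exact: cvg_norm.
have -> : (fun N => \sum_(0 <= k < N) c k ^+ 2) =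
   (fun N => `|series (fun k => c k *: e k) N| ^+ 2) => //.
apply: funext => N; rewrite /series /=; by rewrite (pyth Hip He).
Qed.

Lemma onb_norm_le {R : realType} {X : normedModType R} {ip : X -> X -> R}
  (Hip : inner_product ip) {e : nat -> X} (He : Defs.orthonormal ip e)
  (c : nat -> R) (S : X) (K : R) :
  series (fun k => c k *: e k) @ \oo --> S ->
  (forall N, \sum_(0 <= k < N) c k ^+ 2 <= K) -> `|S| ^+ 2 <= K.
Proof.
move=> hS hK; have h := onb_normsq_lim Hip He c S hS.
rewrite -(cvg_lim _ h) //; apply: limr_le; first exact: cvgP h.
exact: nearW.
Qed.

Lemma onb_cvg {R : realType} {X : completeNormedModType R} {ip : X -> X -> R}
  (Hip : inner_product ip) {e : nat -> X} (He : Defs.orthonormal ip e)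
  (c : nat -> R) (K : R) :
  (forall N, \sum_(0 <= k < N) c k ^+ 2 <= K) ->
  series (fun k => c k *: e k) @ \oo --> hsum (fun k => c k *: e k).
Proof.
move=> hK.
have hr : cvgn (series (fun k => c k ^+ 2)).
  apply: cvgP; apply: nondecreasing_cvgn.
    by apply: nondecreasing_series => n _ _; exact: sqr_ge0.
  by exists K => _ [N _ <-]; exact: hK.
have hc : cauchy (series (fun k => c k ^+ 2) @ \oo) by exact: cvg_cauchy.
have : cvgn (series (fun k => c k *: e k)); last by move=> /cvgP.
apply: cauchy_cvg; apply/cauchy_seriesP => eps eps0.
have := (cauchy_seriesP _).1 hc (eps ^+ 2) (exprn_gt0 _ eps0).
apply: filterS => n hn.
have := pyth Hip He c n.1 n.2.
have h0 : 0 <= \sum_(n.1 <= k < n.2) c k ^+ 2 by apply: sumr_ge0 => k _; exact: sqr_ge0.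
move: hn; rewrite ger0_norm // => hn hp.
have h1 : 0 <= `|\sum_(n.1 <= k < n.2) c k *: e k| by [].
nra.
Qed.



Lemma lim_sub {R : realType} {X : normedModType R} {e : nat -> X}
  {c1 c2 : nat -> R} {S1 S2 : X} :
  series (fun k => c1 k *: e k) @ \oo --> S1 ->
  series (fun k => c2 k *: e k) @ \oo --> S2 ->
  series (fun k => (c1 k - c2 k) *: e k) @ \oo --> S1 - S2.
Proof.
move=> h1 h2.
have E : series (fun k => (c1 k - c2 k) *: e k) =
  (fun N => series (fun k => c1 k *: e k) N - series (fun k => c2 k *: e k) N).
  apply: funext => N; rewrite /series /= -sumrB; apply: eq_bigr => k _.
  exact: scalerBl.
rewrite E; exact: cvgB.
Qed.

Definition cB {R : realType} {Y : normedModType R} (ipY : Y -> Y -> R)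
  (sigma : nat -> R) (v : nat -> Y) (alpha : R) (y : Y) (n : nat) : R :=
  if alpha <= sigma n ^+ 2 then (sigma n)^-1 * ipY y (v n) else 0.

Lemma tsvd_eq {R : realType} {X Y : normedModType R} (ipY : Y -> Y -> R)
  (sigma : nat -> R) (u : nat -> X) (v : nat -> Y) alpha y :
  tsvd ipY sigma u v alpha y = hsum (fun n => cB ipY sigma v alpha y n *: u n).
Proof.
rewrite /tsvd /cB; congr hsum; apply: funext => n; case: ifP => //.
by rewrite scale0r.
Qed.

Lemma cB_bound {R : realType} {Y : normedModType R} {ipY : Y -> Y -> R}
  (HY : inner_product ipY) {v : nat -> Y} (Hv : Defs.orthonormal ipY v)
  {sigma : nat -> R} (Hs : forall n, 0 < sigma n) {alpha : R} (Ha : 0 < alpha) y N :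
  \sum_(0 <= k < N) cB ipY sigma v alpha y k ^+ 2 <= `|y| ^+ 2 / alpha.
Proof.
apply: (@le_trans _ _ (\sum_(0 <= k < N) ipY (v k) y ^+ 2 / alpha)).
  apply: ler_sum => k _; rewrite /cB; case: ifP => h.
    rewrite (ip_sym HY) exprMn exprVn.
    have s0 := Hs k.
    have s2 : 0 < sigma k ^+ 2 by exact: exprn_gt0.
    rewrite mulrC; apply: ler_pM => //; first exact: sqr_ge0.
      by rewrite invr_ge0 ltW.
    by rewrite lef_pV2 ?posrE.
  by rewrite expr0n /= divr_ge0 ?sqr_ge0 ?ltW.
rewrite -mulr_suml; apply: ler_pM => //.
- by apply: sumr_ge0 => k _; exact: sqr_ge0.
- by rewrite invr_ge0 ltW.
- exact: bessel.
Qed.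

Lemma tsvd_cvg {R : realType} {X Y : completeNormedModType R}
  {ipX : X -> X -> R} {ipY : Y -> Y -> R}
  (HX : inner_product ipX) (HY : inner_product ipY)
  {u : nat -> X} {v : nat -> Y} (Hu : Defs.orthonormal ipX u)
  (Hv : Defs.orthonormal ipY v)
  {sigma : nat -> R} (Hs : forall n, 0 < sigma n) {alpha : R} (Ha : 0 < alpha) y :
  series (fun n => cB ipY sigma v alpha y n *: u n) @ \oo -->
    tsvd ipY sigma u v alpha y.
Proof.
rewrite tsvd_eq; apply: (onb_cvg HX Hu).
exact: (cB_bound HY Hv Hs Ha y).
Qed.

Lemma cBB {R : realType} {Y : normedModType R} {ipY : Y -> Y -> R}
  (HY : inner_product ipY) sigma v alpha y1 y2 :
  cB ipY sigma v alpha (y1 - y2) =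
  (fun n => cB ipY sigma v alpha y1 n - cB ipY sigma v alpha y2 n).
Proof.
apply: funext => n; rewrite /cB; case: ifP => _; last by rewrite subr0.
by rewrite (ipBl HY) mulrBr.
Qed.

Lemma tsvdB {R : realType} {X Y : completeNormedModType R}
  {ipX : X -> X -> R} {ipY : Y -> Y -> R}
  (HX : inner_product ipX) (HY : inner_product ipY)
  {u : nat -> X} {v : nat -> Y} (Hu : Defs.orthonormal ipX u)
  (Hv : Defs.orthonormal ipY v)
  {sigma : nat -> R} (Hs : forall n, 0 < sigma n) {alpha : R} (Ha : 0 < alpha) y1 y2 :
  tsvd ipY sigma u v alpha y1 - tsvd ipY sigma u v alpha y2 =
  tsvd ipY sigma u v alpha (y1 - y2).
Proof.
have h := lim_sub (tsvd_cvg HX HY Hu Hv Hs Ha y1) (tsvd_cvg HX HY Hu Hv Hs Ha y2).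
have h2 := tsvd_cvg HX HY Hu Hv Hs Ha (y1 - y2).
rewrite (cBB HY) in h2.
exact: (cvg_unique _ h h2).
Qed.

Lemma tsvd_norm {R : realType} {X Y : completeNormedModType R}
  {ipX : X -> X -> R} {ipY : Y -> Y -> R}
  (HX : inner_product ipX) (HY : inner_product ipY)
  {u : nat -> X} {v : nat -> Y} (Hu : Defs.orthonormal ipX u)
  (Hv : Defs.orthonormal ipY v)
  {sigma : nat -> R} (Hs : forall n, 0 < sigma n) {alpha : R} (Ha : 0 < alpha) y :
  `|tsvd ipY sigma u v alpha y| ^+ 2 <= `|y| ^+ 2 / alpha.
Proof.
apply: (onb_norm_le HX Hu _ _ _ (tsvd_cvg HX HY Hu Hv Hs Ha y)).
exact: (cB_bound HY Hv Hs Ha y).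
Qed.



Lemma svd_coef {R : realType} {X Y : normedModType R}
  {ipX : X -> X -> R} {ipY : Y -> Y -> R} (HY : inner_product ipY)
  {A : X -> Y} {sigma : nat -> R} {u : nat -> X} {v : nat -> Y}
  (Hsvd : is_svd ipX ipY A sigma u v) z m :
  ipY (A z) (v m) = sigma m * ipX (u m) z.
Proof.
case: Hsvd => Hu [Hv [Hs Hser]].
exact: (onb_coef HY Hv (fun n => sigma n * ipX (u n) z) (A z) m (Hser z)).
Qed.

Definition cP {R : realType} {X : normedModType R} (ipX : X -> X -> R)
  (sigma : nat -> R) (u : nat -> X) (alpha : R) (z : X) (n : nat) : R :=
  if alpha <= sigma n ^+ 2 then ipX (u n) z else 0.

Lemma cB_A {R : realType} {X Y : normedModType R}
  {ipX : X -> X -> R} {ipY : Y -> Y -> R} (HY : inner_product ipY)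
  {A : X -> Y} {sigma : nat -> R} {u : nat -> X} {v : nat -> Y}
  (Hsvd : is_svd ipX ipY A sigma u v) alpha z :
  cB ipY sigma v alpha (A z) = cP ipX sigma u alpha z.
Proof.
apply: funext => n; rewrite /cB /cP; case: ifP => // _.
have Hs := (Hsvd.2.2.1 n).
by rewrite (svd_coef HY Hsvd) mulrA mulVf ?mul1r // gt_eqF.
Qed.

Lemma P_cvg {R : realType} {X Y : completeNormedModType R}
  {ipX : X -> X -> R} {ipY : Y -> Y -> R}
  (HX : inner_product ipX) (HY : inner_product ipY)
  {A : X -> Y} {sigma : nat -> R} {u : nat -> X} {v : nat -> Y}
  (Hsvd : is_svd ipX ipY A sigma u v) {alpha : R} (Ha : 0 < alpha) z :
  series (fun n => cP ipX sigma u alpha z n *: u n) @ \oo -->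
    tsvd ipY sigma u v alpha (A z).
Proof.
case: (Hsvd) => Hu [Hv [Hs _]].
have := tsvd_cvg HX HY Hu Hv Hs Ha (A z).
by rewrite (cB_A HY Hsvd).
Qed.

Lemma P_coef {R : realType} {X Y : completeNormedModType R}
  {ipX : X -> X -> R} {ipY : Y -> Y -> R}
  (HX : inner_product ipX) (HY : inner_product ipY)
  {A : X -> Y} {sigma : nat -> R} {u : nat -> X} {v : nat -> Y}
  (Hsvd : is_svd ipX ipY A sigma u v) {alpha : R} (Ha : 0 < alpha) z m :
  ipX (tsvd ipY sigma u v alpha (A z)) (u m) = cP ipX sigma u alpha z m.
Proof.
exact: (onb_coef HX Hsvd.1 _ _ m (P_cvg HX HY Hsvd Ha z)).
Qed.

Lemma P_sub {R : realType} {X Y : completeNormedModType R}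
  {ipX : X -> X -> R} {ipY : Y -> Y -> R}
  (HX : inner_product ipX) (HY : inner_product ipY)
  {A : X -> Y} {sigma : nat -> R} {u : nat -> X} {v : nat -> Y}
  (Hsvd : is_svd ipX ipY A sigma u v) {alpha : R} (Ha : 0 < alpha) z1 z2 :
  tsvd ipY sigma u v alpha (A z1) - tsvd ipY sigma u v alpha (A z2) =
  tsvd ipY sigma u v alpha (A (z1 - z2)).
Proof.
have h := lim_sub (P_cvg HX HY Hsvd Ha z1) (P_cvg HX HY Hsvd Ha z2).
have h2 := P_cvg HX HY Hsvd Ha (z1 - z2).
have E : cP ipX sigma u alpha (z1 - z2) =
   (fun n => cP ipX sigma u alpha z1 n - cP ipX sigma u alpha z2 n).
  apply: funext => n; rewrite /cP; case: ifP => _; last by rewrite subr0.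
  exact: ipBr.
rewrite E in h2.
exact: (cvg_unique _ h h2).
Qed.

Lemma P_fix {R : realType} {X Y : completeNormedModType R}
  {ipX : X -> X -> R} {ipY : Y -> Y -> R}
  (HX : inner_product ipX) (HY : inner_product ipY)
  {A : X -> Y} {sigma : nat -> R} {u : nat -> X} {v : nat -> Y}
  (Hsvd : is_svd ipX ipY A sigma u v) {alpha : R} (Ha : 0 < alpha) x q :
  tsvd ipY sigma u v alpha (A (x - (q - tsvd ipY sigma u v alpha (A q)))) =
  tsvd ipY sigma u v alpha (A x).
Proof.
rewrite [LHS]tsvd_eq [RHS]tsvd_eq !(cB_A HY Hsvd); congr hsum; apply: funext => n.
congr (_ *: _); rewrite /cP; case: ifP => // h.
rewrite !(ipBr HX) (ip_sym HX (u n) (tsvd _ _ _ _ _ _)) (P_coef HX HY Hsvd Ha) /cP h.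
by rewrite subrr subr0.
Qed.

Lemma P_proj {R : realType} {X Y : completeNormedModType R}
  {ipX : X -> X -> R} {ipY : Y -> Y -> R}
  (HX : inner_product ipX) (HY : inner_product ipY)
  {A : X -> Y} {sigma : nat -> R} {u : nat -> X} {v : nat -> Y}
  (Hsvd : is_svd ipX ipY A sigma u v) {alpha : R} (Ha : 0 < alpha) z :
  `|z - tsvd ipY sigma u v alpha (A z)| <= `|z|.
Proof.
set Pz := tsvd ipY sigma u v alpha (A z).
have hc := P_cvg HX HY Hsvd Ha z.
have h1 := onb_ip_lim HX _ _ z hc.
have h2 := onb_normsq_lim HX Hsvd.1 _ _ hc.
have E : (fun N => \sum_(0 <= k < N) cP ipX sigma u alpha z k * ipX (u k) z) =
         (fun N => \sum_(0 <= k < N) cP ipX sigma u alpha z k ^+ 2).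
  apply: funext => N; apply: eq_bigr => k _; rewrite /cP expr2.
  by case: ifP => _; rewrite ?mul0r expr2 ?mul0r.
rewrite E in h1.
have E2 : ipX Pz z = `|Pz| ^+ 2 by exact: (cvg_unique _ h1 h2).
have : `|z - Pz| ^+ 2 <= `|z| ^+ 2.
  rewrite (normsqB HX) (ip_sym HX) E2.
  have := sqr_ge0 `|Pz|; lra.
move=> h; exact: sq_le.
Qed.



Lemma unit_norm {R : realType} {X : normedModType R} {ip : X -> X -> R}
  (Hip : inner_product ip) {e : nat -> X} (He : Defs.orthonormal ip e) n :
  `|e n| = 1.
Proof.
have h : `|e n| ^+ 2 = 1 by rewrite (normsq_ip Hip) He eqxx.
have := normr_ge0 (e n); move: h; set a := `|e n|; move=> h ha; nra.
Qed.

Lemma sigma_bound {R : realType} {X Y : normedModType R}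
  {ipX : X -> X -> R} {ipY : Y -> Y -> R}
  (HX : inner_product ipX) (HY : inner_product ipY)
  {A : X -> Y} {sigma : nat -> R} {u : nat -> X} {v : nat -> Y}
  (Hbl : bounded_linear A) (Hsvd : is_svd ipX ipY A sigma u v) :
  exists M2 : R, 0 <= M2 /\ forall n, sigma n ^+ 2 <= M2.
Proof.
case: Hbl => _ [C HC]; exists (C ^+ 2); split; first exact: sqr_ge0.
move=> n.
have h1 : `|A (u n)| ^+ 2 <= C ^+ 2.
  have := HC (u n); rewrite (unit_norm HX Hsvd.1) mulr1 => h.
  have := normr_ge0 (A (u n)); move: h; set a := `|A (u n)|; move=> h ha; nra.
apply: le_trans h1.
apply: le_trans (bessel HY Hsvd.2.1 (A (u n)) n.+1).
rewrite big_nat_recr //= (ip_sym HY) (svd_coef HY Hsvd) Hsvd.1 eqxx mulr1.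
rewrite lerDr; apply: sumr_ge0 => k _; exact: sqr_ge0.
Qed.

Lemma sq_mono {R : realType} (a b : R) : 0 <= a -> a <= b -> a ^+ 2 <= b ^+ 2.
Proof. move=> ha hb; nra. Qed.

Lemma powR_sig {R : realType} (s mu : R) : 0 <= s -> s `^ (2 * mu) = (s ^+ 2) `^ mu.
Proof. by move=> hs; rewrite powRrM powR_mulrn. Qed.

Lemma T_cvg {R : realType} {X Y : completeNormedModType R}
  {ipX : X -> X -> R} {ipY : Y -> Y -> R}
  (HX : inner_product ipX) (HY : inner_product ipY)
  {A : X -> Y} {sigma : nat -> R} {u : nat -> X} {v : nat -> Y}
  (Hbl : bounded_linear A) (Hsvd : is_svd ipX ipY A sigma u v) (mu : R)
  (Hmu : 0 <= mu) w :
  series (fun n => (sigma n `^ (2 * mu) * ipX (u n) w) *: u n) @ \oo -->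
   AApow ipX sigma u mu w.
Proof.
have [M2 [M20 HM]] := sigma_bound HX HY Hbl Hsvd.
apply: (onb_cvg HX Hsvd.1 _ ((M2 `^ mu) ^+ 2 * `|w| ^+ 2)) => N.
apply: (@le_trans _ _ (\sum_(0 <= k < N) (M2 `^ mu) ^+ 2 * ipX (u k) w ^+ 2)).
  apply: ler_sum => k _; rewrite exprMn; apply: ler_wpM2r; first exact: sqr_ge0.
  apply: sq_mono; first exact: powR_ge0.
  have s0 := ltW (Hsvd.2.2.1 k).
  rewrite powR_sig //; apply: ge0_ler_powR => //; rewrite ?nnegrE ?sqr_ge0 //.
rewrite -mulr_sumr; apply: ler_wpM2l; first exact: sqr_ge0.
exact: (bessel HX Hsvd.1).
Qed.

Lemma T_res {R : realType} {X Y : completeNormedModType R}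
  {ipX : X -> X -> R} {ipY : Y -> Y -> R}
  (HX : inner_product ipX) (HY : inner_product ipY)
  {A : X -> Y} {sigma : nat -> R} {u : nat -> X} {v : nat -> Y}
  (Hbl : bounded_linear A) (Hsvd : is_svd ipX ipY A sigma u v) (mu : R)
  (Hmu : 0 <= mu) {alpha : R} (Ha : 0 < alpha) w :
  `|AApow ipX sigma u mu w - tsvd ipY sigma u v alpha (A (AApow ipX sigma u mu w))|
    <= alpha `^ mu * `|w|.
Proof.
set Tw := AApow ipX sigma u mu w.
have hT := T_cvg HX HY Hbl Hsvd mu Hmu w.
have hP := P_cvg HX HY Hsvd Ha Tw.
have hD := lim_sub hT hP.
apply: sq_le; [exact: normr_ge0 | by rewrite mulr_ge0 ?powR_ge0 |].
apply: (onb_norm_le HX Hsvd.1 _ _ _ hD) => N.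
rewrite exprMn.
apply: (@le_trans _ _ (\sum_(0 <= k < N) (alpha `^ mu) ^+ 2 * ipX (u k) w ^+ 2)).
  apply: ler_sum => k _; rewrite /cP.
  case: ifP => htr.
    rewrite (ip_sym HX (u k) Tw) (onb_coef HX Hsvd.1 _ _ k hT) subrr expr0n /=.
    by rewrite mulr_ge0 ?sqr_ge0.
  rewrite subr0 exprMn; apply: ler_wpM2r; first exact: sqr_ge0.
  apply: sq_mono; first exact: powR_ge0.
  have s0 := ltW (Hsvd.2.2.1 k).
  rewrite powR_sig //; apply: ge0_ler_powR => //; rewrite ?nnegrE ?sqr_ge0 ?ltW //.
  by rewrite ltNge htr.
rewrite -mulr_sumr; apply: ler_wpM2l; first exact: sqr_ge0.
exact: (bessel HX Hsvd.1).
Qed.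



Lemma zmod_id {V : zmodType} (a b c e x : V) :
  a + b - x = (a - e) + (b - c) - ((x - c) - e).
Proof.
by rewrite addrACA -opprD -[x - c - e]addrA -opprD [c + e]addrC opprB addrA subrK.
Qed.
Lemma zmod_id2 {V : zmodType} (w pw t pt : V) :
  w - pw = ((w - t) - (pw - pt)) + (t - pt).
Proof.
rewrite opprB -addrA.
have -> : pt - pw + (t - pt) = t - pw by rewrite addrC addrA subrK.
by rewrite addrA subrK.
Qed.

Theorem theorem4p2 (R : realType)
  (X Y : completeNormedModType R) (ipX : X -> X -> R) (ipY : Y -> Y -> R)
  (A : X -> Y) (sigma : nat -> R) (u : nat -> X) (v : nat -> Y)
  (U : R -> X -> X) (N : X -> X) (rho mu : R) (Mrm : set X) :
  inner_product ipX -> inner_product ipY ->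
  bounded_linear A ->
  is_svd ipX ipY A sigma u v ->
  null_space_network ipX A N ->
  adapted ipX A (tsvd ipY sigma u v) (nu_map A (tsvd ipY sigma u v) U) N ->
  0 < rho -> 0 < mu ->
  Mrm `<=` [set z + N z | z in ran_pinv ipX A] ->
  (forall x, Mrm x -> exists C : R, exists a0 : R, 0 < a0 /\
     forall alpha, 0 < alpha < a0 ->
       dist_alpha A (tsvd ipY sigma u v) (nu_map A (tsvd ipY sigma u v) U)
         (AApow ipX sigma u mu) rho alpha x <= C * alpha `^ mu) ->
  forall (alpha_of : R -> R) (c1 c2 d1 : R),
    0 < c1 -> 0 < c2 -> 0 < d1 ->
    (forall delta, 0 < delta < d1 ->
       c1 * delta `^ (2 / (2 * mu + 1)) <= alpha_of delta
       /\ alpha_of delta <= c2 * delta `^ (2 / (2 * mu + 1))) ->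
  forall x, Mrm x ->
  exists C : R, exists d0 : R, 0 < d0 /\
    forall delta, 0 < delta < d0 ->
    forall y_delta : Y, `|A x - y_delta| <= delta ->
      `|recon A (tsvd ipY sigma u v) U (alpha_of delta) y_delta - x|
        <= C * delta `^ (2 * mu / (2 * mu + 1)).
Proof.
move=> HX HY Hbl Hsvd _ Had rho0 mu0 _ Hd alpha_of c1 c2 d1 c10 c20 d10 Hal x Mx.
have [Cx [a0 [a00 HCx]]] := Hd x Mx.
have [[L [L0 HL]] _] := Had.
have mu0' : 0 <= mu by exact: ltW.
have den0 : 0 < 2 * mu + 1 by lra.
set p := 2 / (2 * mu + 1).
set q := 2 * mu / (2 * mu + 1).
have p0 : 0 < p by rewrite /p divr_gt0.
have q0 : 0 <= q by rewrite /q divr_ge0 // ?mulr_ge0 // ltW.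
set K := 1 + c1^-1.
have K0 : 0 <= K by rewrite /K addr_ge0 // invr_ge0 ltW.
have Kc1 : 1 <= K ^+ 2 * c1.
  have ht : c1 * c1^-1 = 1 by rewrite mulfV // gt_eqF.
  have ht0 : 0 < c1^-1 by rewrite invr_gt0.
  rewrite /K; move: ht ht0; set t := c1^-1 => ht ht0; nra.
set Cm := Num.max Cx 0.
set C := (1 + L) * K + (Cm + 1 + rho) * c2 `^ mu.
set b := (a0 / c2) `^ (p^-1).
have b0 : 0 < b by rewrite /b powR_gt0 // divr_gt0.
exists C, (Num.min d1 b); split; first by rewrite lt_min d10 b0.
move=> delta /andP[dl0]; rewrite lt_min => /andP[dd1 db] y hy.
have [hal1 hal2] : c1 * delta `^ p <= alpha_of delta /\ alpha_of delta <= c2 * delta `^ p.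
  by apply: Hal; rewrite dl0 dd1.
set alpha := alpha_of delta.
have dp0 : 0 < delta `^ p by exact: powR_gt0.
have Ha : 0 < alpha by apply: lt_le_trans hal1; rewrite mulr_gt0.
have Ha0 : alpha < a0.
  apply: (le_lt_trans hal2).
  have : delta `^ p < b `^ p.
    by apply: gt0_ltr_powR; rewrite ?nnegrE ?ltW.
  rewrite /b -powRrM mulVf ?gt_eqF // powRr1 ?divr_ge0 ?ltW // => h.
  by rewrite -ltr_pdivlMl // mulrC.
have := HCx alpha; rewrite Ha Ha0 => /(_ isT) hdist.
case: (Hsvd) => Hu [Hv [Hs _]].
set B := tsvd ipY sigma u v.
set nu := nu_map A B U.
set T := AApow ipX sigma u mu.
set z1 := B alpha (A x).
set w := x - nu alpha z1.
set d := dist_alpha A B nu T rho alpha x.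
have am0 : 0 < alpha `^ mu by exact: powR_gt0.
have [r [om hom <-] hr] : exists2 r,
    [set `|w - T om| | om in [set om | `|om| <= rho]] r & r < d + alpha `^ mu.
  apply: inf_lt.
    exists `|w - T 0|; exists 0 => //=; by rewrite normr0 ltW.
  by rewrite /d /dist_alpha ltrDl.
have Pw : B alpha (A w) = z1.
  exact: (P_fix HX HY Hsvd Ha x (U alpha z1)).
have hBy : `|B alpha y - z1| <= K * delta `^ q.
  rewrite /z1 (tsvdB HX HY Hu Hv Hs Ha).
  have h1 := tsvd_norm HX HY Hu Hv Hs Ha (y - A x).
  apply: sq_le; [exact: normr_ge0 | by rewrite mulr_ge0 ?powR_ge0 |].
  apply: (le_trans h1).
  have hy2 : `|y - A x| ^+ 2 <= delta ^+ 2.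
    by apply: sq_mono; rewrite ?normr_ge0 // distrC.
  have E : delta `^ q * delta `^ q * delta `^ p = delta ^+ 2.
    rewrite -!powRD ?(gt_eqF dl0) ?implybT //.
    have -> : q + q + p = 2%:R by rewrite /q /p; field; rewrite gt_eqF.
    by rewrite powR_mulrn // ltW.
  rewrite ler_pdivrMr //.
  apply: (le_trans hy2).
  have hq0 : 0 <= delta `^ q by exact: powR_ge0.
  have : (K * delta `^ q) ^+ 2 * (c1 * delta `^ p) <= (K * delta `^ q) ^+ 2 * alpha.
    by apply: ler_wpM2l => //; exact: sqr_ge0.
  move: E Kc1; set D := delta `^ q; set P := delta `^ p => E Kc1 h.
  have hP0 : 0 <= P by exact: powR_ge0.
  apply: le_trans h.
  have -> : (K * D) ^+ 2 * (c1 * P) = (K ^+ 2 * c1) * (D * D * P) by ring.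
  rewrite E; have := sqr_ge0 delta; nra.
have hnu : `|nu alpha (B alpha y) - nu alpha z1| <= L * `|B alpha y - z1|.
  exact: HL.
have hw : `|w - B alpha (A w)| <= `|w - T om| + alpha `^ mu * rho.
  rewrite (zmod_id2 w (B alpha (A w)) (T om) (B alpha (A (T om)))).
  rewrite (P_sub HX HY Hsvd Ha).
  apply: (le_trans (ler_normD _ _)); apply: lerD.
    exact: (P_proj HX HY Hsvd Ha).
  apply: (le_trans (T_res HX HY Hbl Hsvd mu mu0' Ha om)).
  by apply: ler_wpM2l => //; exact: ltW.
have ham : alpha `^ mu <= c2 `^ mu * delta `^ q.
  have c2dp : 0 <= c2 * delta `^ p by rewrite mulr_ge0 ?powR_ge0 // ltW.
  apply: (@le_trans _ _ ((c2 * delta `^ p) `^ mu)).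
    apply: ge0_ler_powR => //; rewrite nnegrE //; exact: ltW.
  rewrite powRM; [|exact: ltW|exact: powR_ge0].
  rewrite -powRrM.
  by have -> : p * mu = q by rewrite /p /q; field; rewrite gt_eqF.
have hdm : d <= Cm * alpha `^ mu.
  apply: (le_trans hdist); apply: ler_wpM2r; first exact: ltW.
  by rewrite le_max lexx.
have Cm0 : 0 <= Cm by rewrite le_max lexx orbT.
have Erec : recon A B U alpha y - x =
    (B alpha y - z1) + (nu alpha (B alpha y) - nu alpha z1) - (w - B alpha (A w)).
  by rewrite Pw /recon -/nu (zmod_id _ _ (nu alpha z1) z1 x).
rewrite Erec.
apply: (le_trans (ler_normB _ _)).
apply: (le_trans (lerD (ler_normD _ _) (lexx _))).
have hD0 : 0 <= delta `^ q by exact: powR_ge0.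
have hL1 : L * `|B alpha y - z1| <= L * (K * delta `^ q).
  by apply: ler_wpM2l => //; exact: ltW.
have hCm : (Cm + 1 + rho) * alpha `^ mu <= (Cm + 1 + rho) * (c2 `^ mu * delta `^ q).
  by apply: ler_wpM2l => //; lra.
rewrite /C.
move: hBy hnu hw hr hdm hL1 hCm; set a1 := `|B alpha y - z1|; set a2 := alpha `^ mu.
set D := delta `^ q; set c2m := c2 `^ mu; lra.
Qed.
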